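(* Let $\mathcal D$ be a non-trivial $2$-$(k^{2},k,\lambda)$ design with $\lambda\mid k$ and $G$ a flag-transitive automorphism group which is almost simple with socle $X$. Then for every point $x$ and every point $y\neq x$, the integer $\frac{k+1}{\gcd(k+1,|\mathrm{Out}(X)|)}$ divides $|y^{X_x}|$, and hence divides $|X_x|$.
   Context: A $2$-$(v,k,\lambda)$ design: $v$ points, blocks are $k$-subsets, every two distinct points lie in exactly $\lambda$ blocks; non-trivial: $2<k<v$. Flag-transitive: transitive on incident point–block pairs. $G$ almost simple with socle $X$ means $X\trianglelefteq G\le\mathrm{Aut}(X)$ with $X$ non-abelian simple. $X_x$ is the stabilizer in $X$ of the point $x$, $y^{X_x}$ the orbit of $y$ under $X_x$, $\mathrm{Out}(X)=\mathrm{Aut}(X)/\mathrm{Inn}(X)$. *)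

(* Defs.v *)
From mathcomp Require Import all_boot all_fingroup all_solvable.
Set Implicit Arguments. Unset Strict Implicit. Unset Printing Implicit Defensive.
Local Open Scope group_scope.

Definition Inn (gT : finGroupType) (X : {set gT}) : {set {perm gT}} :=
  [set a in Aut X | [exists x in X, [forall y in X, a y == y ^ x]]].

Definition out_order (gT : finGroupType) (X : {set gT}) : nat :=
  #|Aut X| %/ #|Inn X|.

Definition is_2design (T : finType) (B : {set {set T}}) (k lambda : nat) :=
  (forall b, b \in B -> #|b| = k) /\
  (forall x y : T, x != y -> #|[set b in B | (x \in b) && (y \in b)]| = lambda).

Definition design_aut (T : finType) (B : {set {set T}}) (G : {set {perm T}}) :=
  forall g, g \in G -> forall b, b \in B -> [set g z | z in b] \in B.

Definition flag_transitive (T : finType) (B : {set {set T}}) (G : {set {perm T}}) :=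
  forall x b x' b', b \in B -> x \in b -> b' \in B -> x' \in b' ->
    exists2 g, g \in G & g x = x' /\ [set g z | z in b] = b'.

(* G is almost simple with socle X: X is a non-abelian simple normal
   subgroup of G with trivial centraliser in G, i.e. X <| G <= Aut(X)
   via the conjugation action. *)
Definition almost_simple_socle (gT : finGroupType) (G X : {group gT}) :=
  [/\ X <| G, simple X, ~~ abelian X & 'C_G(X) = 1].

(* Main.v *)
Require Import Defs.
From mathcomp Require Import all_boot all_fingroup all_solvable.
From mathcomp Require Import zify.
Local Open Scope group_scope.

Lemma dcount (T : finType) (Bs : {set {set T}}) (D : {set T}) :
  (\sum_(b in Bs) #|b :&: D| = \sum_(z in D) #|[set b in Bs | z \in b]|)%N.
Proof.
transitivity (\sum_(b in Bs) \sum_(z in D) ((z \in b) : nat))%N.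
  apply: eq_bigr => b _; rewrite -sum1_card big_mkcond [RHS]big_mkcond /=.
  by apply: eq_bigr => z _; rewrite inE; case: (z \in b); case: (z \in D).
rewrite exchange_big /=; apply: eq_bigr => z _.
rewrite -sum1_card big_mkcond [RHS]big_mkcond /=.
by apply: eq_bigr => b _; rewrite inE; case: (z \in b); case: (b \in Bs).
Qed.

Lemma conj_inj (gT : finGroupType) (G X : {group gT}) :
  G \subset 'N(X) -> 'C_G(X) = 1 -> {in G &, injective (conj_aut X)}.
Proof.
move=> nXG cG g1 g2 g1G g2G e.
have z1 : g1 * g2^-1 \in 'C_G(X).
  apply/subcentP; split; first by rewrite groupM ?groupV.
  move=> y yX; apply/commute_sym/commgP; rewrite -conjg_fix; apply/eqP.
  have ey : y ^ g1 = y ^ g2.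
    by rewrite -!(norm_conj_autE (G:=X)) ?(subsetP nXG) // e.
  by rewrite conjgM ey conjgK.
by move: z1; rewrite cG inE -eq_mulgV1 => /eqP.
Qed.

Lemma out_div (gT : finGroupType) (G X : {group gT}) :
  X <| G -> 'C_G(X) = 1 -> (#|G| %/ #|X| %| out_order X)%N.
Proof.
move=> nXG cG; have nX := normal_norm nXG; have sXG := normal_sub nXG.
have inj := @conj_inj _ G X nX cG.
have autc g : g \in 'N(X) -> conj_aut X g \in Aut X.
  move=> gN; apply: (subsetP (Aut_conj_aut X 'N(X))).
  exact: mem_morphim.
have Inn_card : #|Inn X| = #|X|.
  have -> : Inn X = conj_aut X @: X.
    apply/setP => a; rewrite inE; apply/andP/imsetP.
      case=> aA /existsP [g /andP [gX /forallP H]]; exists g => //.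
      apply: (eq_Aut aA); first by apply: autc; rewrite (subsetP nX) // (subsetP sXG).
      by move=> y yX; move: (H y); rewrite yX /= => /eqP ->; rewrite conj_autE.
    case=> g gX ->; split; first by apply: autc; rewrite (subsetP nX) // (subsetP sXG).
    apply/existsP; exists g; rewrite gX /=; apply/forallP => y.
    by apply/implyP => yX; rewrite conj_autE.
  apply: card_in_imset => g1 g2 g1X g2X; apply: inj; exact: (subsetP sXG).
have dG : (#|G| %| #|Aut X|)%N.
  have <- : #|conj_aut X @* G| = #|G|.
    by rewrite morphimEsub // card_in_imset.
  exact: cardSg (Aut_conj_aut _ _).
rewrite /out_order Inn_card.
case/dvdnP: dG => t ->; have /dvdnP [m ->] := cardSg sXG.
by rewrite mulnA mulnK ?mulnK ?cardG_gt0 // dvdn_mull.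
Qed.

Lemma arith n a i o : (0 < n)%N -> (n %| a * i)%N -> (i %| o)%N ->
  (n %/ gcdn n o %| a)%N.
Proof.
move=> n0 h io; have g0 : (0 < gcdn n o)%N by rewrite gcdn_gt0 n0.
rewrite -(dvdn_pmul2r g0) divnK ?dvdn_gcdl // muln_gcdr dvdn_gcd.
rewrite dvdn_mull //=; apply: dvdn_trans h _; exact: dvdn_mul (dvdnn a) io.
Qed.

Theorem lemma3p5 (T : finType) (B : {set {set T}}) (k lambda : nat)
  (G X : {group {perm T}}) :
  (#|T| = k ^ 2)%N -> (2 < k)%N -> (k < #|T|)%N ->
  is_2design B k lambda -> (lambda %| k)%N ->
  design_aut B G -> flag_transitive B G ->
  almost_simple_socle G X ->
  forall x y : T, y != x ->
    let d := (k.+1 %/ gcdn k.+1 (out_order X))%N in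
    (d %| #|orbit 'P 'C_X[x | 'P] y|)%N /\ (d %| #|'C_X[x | 'P]|)%N.
Proof.
move=> hv hk hkv [hblk hlam] hdiv hdaut hflag [nXG simX nabX cG] x y yx d.
have sXG := normal_sub nXG; have nX := normal_norm nXG.
have lam0 : (0 < lambda)%N.
  by case: lambda hdiv {hlam} => // /[!dvd0n] /eqP k0; rewrite k0 in hk.
set H := 'C_G[x | 'P].
set K := 'C_X[x | 'P].
set Delta := orbit 'P H y.
have dDelta : (k.+1 %| #|Delta|)%N.
  set Bx := [set b in B | x \in b].
  have Bx2 z : z != x -> [set b in Bx | z \in b] = [set b in B | (x \in b) && (z \in b)].
    by move=> _; apply/setP => b; rewrite !inE andbA.
  have hr : (#|Bx| * (k - 1) = (k ^ 2 - 1) * lambda)%N.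
    have e1 := @dcount _ Bx (~: [set x]).
    have s1 : (\sum_(b in Bx) #|b :&: ~: [set x]| = #|Bx| * (k - 1))%N.
      rewrite -sum_nat_const; apply: eq_bigr.
      move=> b; rewrite inE => /andP [bB xb].
      rewrite -setDE; have := cardsD1 x b; rewrite xb (hblk b bB) add1n => ->; by rewrite subn1.
    have s2 : (\sum_(z in ~: [set x]) #|[set b in Bx | z \in b]| = #|~: [set x]| * lambda)%N.
      rewrite -sum_nat_const; apply: eq_bigr.
      move=> z; rewrite !inE => zx; rewrite Bx2 // hlam //; by rewrite eq_sym.
    by rewrite s1 s2 cardsC1 hv -subn1 in e1.
  have [b0 [b0B xb0 yb0]] : exists b0, [/\ b0 \in B, x \in b0 & y \in b0].
    have := hlam x y; rewrite eq_sym yx => /(_ isT) hc.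
    have : (0 < #|[set b in B | (x \in b) && (y \in b)]|)%N by rewrite hc.
    by case/card_gt0P => b; rewrite !inE => /and3P [? ? ?]; exists b.
  have HP g : g \in G -> g x = x -> g \in H.
    by move=> gG gx; rewrite /H in_setI gG; apply/astab1P; rewrite /= apermE.
  have le b1 b2 : b1 \in Bx -> b2 \in Bx -> (#|b1 :&: Delta| <= #|b2 :&: Delta|)%N.
    rewrite !inE => /andP [b1B xb1] /andP [b2B xb2].
    have [g gG [gx gb]] := hflag x b1 x b2 b1B xb1 b2B xb2.
    have gH := HP g gG gx.
    rewrite -(card_imset _ (@perm_inj _ g)); apply: subset_leq_card.
    apply/subsetP => w /imsetP [z]; rewrite inE => /andP [zb zD] ->.
    rewrite inE -gb imset_f //=.
    rewrite /Delta; have := zD => /orbit_eqP <-.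
    by have := mem_orbit 'P z gH; rewrite /= apermE.
  have b0x : b0 \in Bx by rewrite inE b0B xb0.
  have hc : (#|Bx| * #|b0 :&: Delta| = #|Delta| * lambda)%N.
    have e2 := @dcount _ Bx Delta.
    have s1 : (\sum_(b in Bx) #|b :&: Delta| = #|Bx| * #|b0 :&: Delta|)%N.
      rewrite -sum_nat_const; apply: eq_bigr.
      by move=> b bx; apply/eqP; rewrite eqn_leq !le.
    have s2 : (\sum_(z in Delta) #|[set b in Bx | z \in b]| = #|Delta| * lambda)%N.
      rewrite -sum_nat_const; apply: eq_bigr.
      move=> z zD; have zx : z != x.
        apply/eqP => zx; move: zD; rewrite zx => /orbitP [g gH gy].
        move: gH; rewrite in_setI => /andP [_ /astab1P]; rewrite /= apermE => gx.
        move: gy; rewrite /= apermE => gy; have : g y = g x by rewrite gx.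
        by move/perm_inj => yx'; rewrite yx' eqxx in yx.
      by rewrite Bx2 // hlam // eq_sym.
    by rewrite s1 s2 in e2.
  have rE : #|Bx| = (k.+1 * lambda)%N.
    have k1 : (0 < k - 1)%N by rewrite subn_gt0 ltnW.
    have kk : (k ^ 2 - 1 = (k - 1) * k.+1)%N by rewrite -{2}(exp1n 2) subn_sqr addn1.
    apply/eqP; rewrite -(eqn_pmul2r k1) hr kk; apply/eqP.
    by rewrite -mulnA mulnC.
  rewrite rE in hc.
  have : #|Delta| = (k.+1 * #|b0 :&: Delta|)%N.
    apply/eqP; rewrite -(eqn_pmul2r lam0); apply/eqP; by rewrite -hc mulnAC.
  by move=> ->; apply: dvdn_mulr.
set Hy := 'C_H[y | 'P].
have sKH : K \subset H by apply: setSI.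
have HX : H :&: X = K by rewrite /H /K setIC setIA (setIidPl sXG).
have KyE : 'C_K[y | 'P] = K :&: Hy by rewrite /Hy setIA (setIidPl sKH).
have nXH : H \subset 'N(X) by apply: subset_trans (subsetIl _ _) nX.
have nKH : H \subset 'N(K).
  apply: normsI => //; apply: subset_trans (subsetIr _ _) (normG _).
have sHyH : Hy \subset H by apply: subsetIl.
have nKHy : Hy \subset 'N(K) by apply: subset_trans sHyH nKH.
have KHyE : K <*> Hy = K * Hy by apply: norm_joinEr.
have sKHyH : K <*> Hy \subset H by rewrite join_subG sKH.
have E1 : (#|Delta| * #|Hy| = #|H|)%N by apply: card_orbit_stab.
have E2 : (#|orbit 'P K y| * #|'C_K[y | 'P]| = #|K|)%N by apply: card_orbit_stab.
have E3 : (#|K| * #|Hy| = #|(K * Hy)%g| * #|K :&: Hy|)%N.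
  exact: (mul_cardG [group of K] [group of Hy]).
have E4 : (#|K <*> Hy| * #|H : K <*> Hy| = #|H|)%N by apply: Lagrange.
have E5 : (#|H :&: X| * #|H : X| = #|H|)%N by apply: (LagrangeI [group of H] X).
have E6 : (#|K| * #|K <*> Hy : K| = #|K <*> Hy|)%N by apply: Lagrange; apply: joing_subl.
have HXE : H <*> X = (H * X)%g by apply: norm_joinEl.
have E7 : (#|H : X| * #|X| = #|(H * X)%g|)%N by apply: (LagrangeMr [group of H] X).
have dHX : (#|(H * X)%g| %| #|G|)%N.
  rewrite -HXE; apply: cardSg; rewrite join_subG sXG andbT; apply: subsetIl.
rewrite -KHyE in E3; rewrite HX in E5; rewrite -KyE in E3.
set i := #|H : K <*> Hy|.
set j := #|K <*> Hy : K|.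
set a := #|orbit 'P K y|.
have pHy : (0 < #|Hy|)%N by apply: (cardG_gt0 [group of Hy]).
have pKy : (0 < #|'C_K[y | 'P]|)%N by apply: (cardG_gt0 [group of 'C_K[y | 'P]]).
have pK : (0 < #|K|)%N by apply: (cardG_gt0 [group of K]).
have iHX : #|H : X| = (j * i)%N.
  apply/eqP; rewrite -(eqn_pmul2l pK); apply/eqP.
  by rewrite E5 -E4 -E6 mulnA.
have Da : #|Delta| = (a * i)%N.
  apply/eqP; rewrite -(eqn_pmul2r pHy) -(eqn_pmul2r pKy); apply/eqP.
  rewrite E1 -E4 mulnAC -E3 -E2.
  rewrite /a /i -!mulnA (mulnC #|H : K <*> Hy|) (mulnC #|Hy| #|'C_K[y | 'P]|).
  by rewrite -[in RHS]mulnA.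
have iGX : (i %| #|G| %/ #|X|)%N.
  case/dvdnP: dHX => s ->; rewrite -E7 iHX mulnA mulnK ?cardG_gt0 //.
  by apply/dvdn_mull/dvdn_mull.
have io : (i %| out_order X)%N := dvdn_trans iGX (@out_div _ G X nXG cG).
have da : (d %| a)%N.
  apply: (arith k.+1 a i (out_order X) (ltn0Sn k) _ io); by rewrite -Da.
split; first exact: da.
apply: dvdn_trans da _; rewrite /a -E2; apply: dvdn_mulr; exact: dvdnn.
Qed.
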